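(* Let $F_1,\dots,F_n$ be groups and let $F=F_1\times\dots\times F_n$ act on a set $X$. Let $x\in X$, let $\mathrm{Stab}(x)$ be its stabilizer in $F$, and $S_i=\mathrm{Stab}(x)\cap F_i$. Assume $\mathrm{Stab}(x)\trianglelefteq F$ (so $S_i\trianglelefteq F_i$). Let $Z(F_i/S_i)$ be the center of $F_i/S_i$ and $Q_i=(F_i/S_i)/Z(F_i/S_i)$. Then the natural epimorphism $F_1\times\dots\times F_n\to Q_1\times\dots\times Q_n$ factors through an epimorphism $F/\mathrm{Stab}(x)\twoheadrightarrow Q_1\times\dots\times Q_n$. In particular, if all groups $F_i/S_i$ are non-abelian, then each $Q_i$ is non-trivial and $\#(F\cdot x)=\#(F/\mathrm{Stab}(x))\geq 2^n$. *)

(* Defs.v *)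
From mathcomp Require Import all_boot.
From Stdlib Require ClassicalEpsilon.
Import ClassicalEpsilon (constructive_indefinite_description).

Set Implicit Arguments.
Unset Strict Implicit.
Unset Printing Implicit Defensive.

Record magma := Magma {
  car :> Type;
  gmul : car -> car -> car;
  gone : car;
  ginv : car -> car }.
Arguments gone {m}.

Definition is_group (G : magma) : Prop :=
  (forall a b c : G, gmul a (gmul b c) = gmul (gmul a b) c) /\
  (forall a : G, gmul gone a = a) /\ (forall a : G, gmul a gone = a) /\
  (forall a : G, gmul (ginv a) a = gone) /\ (forall a : G, gmul a (ginv a) = gone).

Definition is_hom (G H : magma) (f : G -> H) : Prop :=
  forall a b : G, f (gmul a b) = gmul (f a) (f b).

Definition surjective (A B : Type) (f : A -> B) : Prop :=
  forall b : B, exists a : A, f a = b.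

Definition is_subgroup (G : magma) (N : G -> Prop) : Prop :=
  N gone /\ (forall a b, N a -> N b -> N (gmul a b)) /\ (forall a, N a -> N (ginv a)).

Definition is_normal (G : magma) (N : G -> Prop) : Prop :=
  is_subgroup N /\ forall g h : G, N h -> N (gmul (gmul g h) (ginv g)).

Definition commutative_group (G : magma) : Prop :=
  forall a b : G, gmul a b = gmul b a.

Definition center (G : magma) : G -> Prop :=
  fun z => forall g : G, gmul z g = gmul g z.

Definition prodM (n : nat) (F : 'I_n -> magma) : magma :=
  @Magma (forall i : 'I_n, F i)
    (fun g h i => gmul (g i) (h i)) (fun i => gone) (fun g i => ginv (g i)).

(* Quotient G/N: carrier = left cosets g N, operations through representatives
   (well defined, and a group, when N is normal). *)
Definition lcoset (G : magma) (N : G -> Prop) (g : G) : G -> Prop :=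
  fun h => N (gmul (ginv g) h).

Definition coset_car (G : magma) (N : G -> Prop) : Type :=
  {A : G -> Prop | exists g : G, A = lcoset N g}.

Definition qproj (G : magma) (N : G -> Prop) (g : G) : coset_car N :=
  exist _ (lcoset N g) (ex_intro _ g erefl).

Definition qrep (G : magma) (N : G -> Prop) (A : coset_car N) : G :=
  proj1_sig (constructive_indefinite_description _ (proj2_sig A)).

Definition quotM (G : magma) (N : G -> Prop) : magma :=
  @Magma (coset_car N)
    (fun A B => qproj N (gmul (qrep A) (qrep B)))
    (qproj N gone)
    (fun A => qproj N (ginv (qrep A))).

Definition is_action (G : magma) (X : Type) (act : G -> X -> X) : Prop :=
  (forall x, act gone x = x) /\
  (forall (g h : G) x, act (gmul g h) x = act g (act h x)).

Definition stab (G : magma) (X : Type) (act : G -> X -> X) (x : X) : G -> Prop :=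
  fun g => act g x = x.

Definition orbitX (G : magma) (X : Type) (act : G -> X -> X) (x : X) : X -> Prop :=
  fun y => exists g : G, y = act g x.

Definition stab_factor (n : nat) (F : 'I_n -> magma) (X : Type)
  (act : prodM F -> X -> X) (x : X) (i : 'I_n) : F i -> Prop :=
  fun a => exists g : prodM F,
    g i = a /\ (forall j, j <> i -> g j = gone) /\ stab act x g.

Arguments stab_factor {n F X} act x i _.

Definition FS (n : nat) (F : 'I_n -> magma) (X : Type)
  (act : prodM F -> X -> X) (x : X) (i : 'I_n) : magma :=
  quotM (stab_factor act x i).

Definition Qf (n : nat) (F : 'I_n -> magma) (X : Type)
  (act : prodM F -> X -> X) (x : X) (i : 'I_n) : magma :=
  quotM (@center (FS act x i)).

Definition natQ (n : nat) (F : 'I_n -> magma) (X : Type)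
  (act : prodM F -> X -> X) (x : X) (g : prodM F) : prodM (Qf act x) :=
  fun i => qproj (@center (FS act x i)) (qproj (stab_factor act x i) (g i)).

(* Main.v *)
Require Import Defs.
From mathcomp Require Import all_boot.
From Stdlib Require Import ProofIrrelevance FunctionalExtensionality PropExtensionality Classical.
From Stdlib Require ClassicalEpsilon.

Set Implicit Arguments.
Unset Strict Implicit.
Unset Printing Implicit Defensive.

Local Notation cid := ClassicalEpsilon.constructive_indefinite_description.
Local Notation "a ** b" := (gmul a b) (at level 40, left associativity).

Lemma mulA (G : magma) (HG : is_group G) (a b c : G) : a ** (b ** c) = a ** b ** c.
Proof. by case: HG. Qed.
Lemma mul1g (G : magma) (HG : is_group G) (a : G) : gone ** a = a.
Proof. by case: HG => _ []. Qed.
Lemma mulg1 (G : magma) (HG : is_group G) (a : G) : a ** gone = a.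
Proof. by case: HG => _ [_ []]. Qed.
Lemma mulVg (G : magma) (HG : is_group G) (a : G) : ginv a ** a = gone.
Proof. by case: HG => _ [_ [_ []]]. Qed.
Lemma mulgV (G : magma) (HG : is_group G) (a : G) : a ** ginv a = gone.
Proof. by case: HG => _ [_ [_ []]]. Qed.
Lemma mulKg (G : magma) (HG : is_group G) (a b : G) : ginv a ** (a ** b) = b.
Proof. by rewrite (mulA HG) (mulVg HG) (mul1g HG). Qed.
Lemma mulKVg (G : magma) (HG : is_group G) (a b : G) : a ** (ginv a ** b) = b.
Proof. by rewrite (mulA HG) (mulgV HG) (mul1g HG). Qed.
Lemma mulgK (G : magma) (HG : is_group G) (a b : G) : b ** a ** ginv a = b.
Proof. by rewrite -(mulA HG) (mulgV HG) (mulg1 HG). Qed.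
Lemma inv_uniq (G : magma) (HG : is_group G) (a b : G) : a ** b = gone -> ginv a = b.
Proof. by move=> H; rewrite -[ginv a](mulg1 HG) -H (mulKg HG). Qed.
Lemma invK (G : magma) (HG : is_group G) (a : G) : ginv (ginv a) = a.
Proof. by apply: (inv_uniq HG); rewrite (mulVg HG). Qed.
Lemma invM (G : magma) (HG : is_group G) (a b : G) : ginv (a ** b) = ginv b ** ginv a.
Proof. by apply: (inv_uniq HG); rewrite -(mulA HG) (mulKVg HG) (mulgV HG). Qed.
Lemma inv1 (G : magma) (HG : is_group G) : ginv (gone : G) = gone.
Proof. by apply: (inv_uniq HG); rewrite (mul1g HG). Qed.
Lemma mul_lcancel (G : magma) (HG : is_group G) (a b c : G) : a ** b = a ** c -> b = c.
Proof. by move=> H; rewrite -(mulKg HG a b) H (mulKg HG). Qed.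

Ltac gnorm HG := do 4 rewrite ?(invM HG) ?(invK HG) ?(inv1 HG) -?(mulA HG)
  ?(mulKg HG) ?(mulKVg HG) ?(mul1g HG) ?(mulgV HG) ?(mulVg HG) ?(mulg1 HG).

Lemma sig_ext (T : Type) (P : T -> Prop) (u v : {t | P t}) :
  proj1_sig u = proj1_sig v -> u = v.
Proof. case: u v => [a pa] [b pb] /= E; subst b; f_equal; apply: proof_irrelevance. Qed.

Lemma qrepK (G : magma) (N : G -> Prop) (A : coset_car N) : qproj N (qrep A) = A.
Proof.
rewrite /qrep; case: (cid _ _) => g Hg; apply: sig_ext => /=; by rewrite Hg.
Qed.

Lemma qproj_surj (G : magma) (N : G -> Prop) (A : coset_car N) : exists g, A = qproj N g.
Proof. by exists (qrep A); rewrite qrepK. Qed.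

Lemma Nsym (G : magma) (HG : is_group G) (N : G -> Prop) (HN : is_normal N) (a b : G) :
  N (ginv a ** b) -> N (ginv b ** a).
Proof.
case: HN => [[N1 [NM NV]] Nc] H; have := NV _ H; by rewrite (invM HG) (invK HG).
Qed.

Lemma qproj_eqP (G : magma) (HG : is_group G) (N : G -> Prop) (HN : is_normal N) (g h : G) :
  qproj N g = qproj N h <-> N (ginv g ** h).
Proof.
have HN' := HN; case: HN' => [[N1 [NM NV]] Nc]; split.
- move=> /(f_equal (@proj1_sig _ _)) /= E.
  have H : lcoset N h h by rewrite /lcoset (mulVg HG).
  by rewrite -E in H.
- move=> H; apply: sig_ext => /=; apply: functional_extensionality => z.
  apply: propositional_extensionality; rewrite /lcoset; split => Hz.
  + have -> : ginv h ** z = (ginv h ** g) ** (ginv g ** z) by gnorm HG.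
    by apply: NM => //; apply: (Nsym HG HN).
  + have -> : ginv g ** z = (ginv g ** h) ** (ginv h ** z) by gnorm HG.
    by apply: NM.
Qed.

Lemma qrep_rel (G : magma) (HG : is_group G) (N : G -> Prop) (HN : is_normal N) (g : G) :
  N (ginv g ** qrep (qproj N g)).
Proof. apply: (Nsym HG HN); apply/(qproj_eqP HG HN); exact: qrepK. Qed.

Lemma qproj_mul (G : magma) (HG : is_group G) (N : G -> Prop) (HN : is_normal N) (g h : G) :
  qproj N (g ** h) = @gmul (quotM N) (qproj N g) (qproj N h).
Proof.
have HN' := HN; case: HN' => [[N1 [NM NV]] Nc].
change (qproj N (g ** h) = qproj N (qrep (qproj N g) ** qrep (qproj N h))).
apply/(qproj_eqP HG HN).
have H1 := qrep_rel HG HN g; have H2 := qrep_rel HG HN h.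
set r1 := qrep _ in H1 *; set r2 := qrep _ in H2 *.
have := NM _ _ (Nc (ginv h) _ H1) H2.
by gnorm HG.
Qed.

Lemma qproj_inv (G : magma) (HG : is_group G) (N : G -> Prop) (HN : is_normal N) (g : G) :
  @ginv (quotM N) (qproj N g) = qproj N (ginv g).
Proof.
have HN' := HN; case: HN' => [[N1 [NM NV]] Nc].
change (qproj N (ginv (qrep (qproj N g))) = qproj N (ginv g)).
apply/(qproj_eqP HG HN).
have := Nc g _ (qrep_rel HG HN g).
by gnorm HG.
Qed.

Lemma quot_group (G : magma) (HG : is_group G) (N : G -> Prop) (HN : is_normal N) :
  is_group (quotM N).
Proof.
have E1 : (gone : quotM N) = qproj N gone by [].
split; [|split; [|split; [|split]]].
- move=> a b c; case: (qproj_surj a) => a' ->; case: (qproj_surj b) => b' ->;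
  case: (qproj_surj c) => c' ->.
  by rewrite -!(qproj_mul HG HN) (mulA HG).
- move=> a; case: (qproj_surj a) => a' ->.
  by rewrite E1 -(qproj_mul HG HN) (mul1g HG).
- move=> a; case: (qproj_surj a) => a' ->.
  by rewrite E1 -(qproj_mul HG HN) (mulg1 HG).
- move=> a; case: (qproj_surj a) => a' ->.
  by rewrite E1 (qproj_inv HG HN) -(qproj_mul HG HN) (mulVg HG).
- move=> a; case: (qproj_surj a) => a' ->.
  by rewrite E1 (qproj_inv HG HN) -(qproj_mul HG HN) (mulgV HG).
Qed.

Lemma center_normal (H : magma) (HH : is_group H) : is_normal (@center H).
Proof.
split; [split; [|split]|].
- by move=> g; rewrite (mul1g HH) (mulg1 HH).
- by move=> a b Ha Hb g; rewrite -(mulA HH) Hb (mulA HH) Ha -(mulA HH).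
- move=> a Ha g; apply: (mul_lcancel HH (a := a)).
  by rewrite (mulKVg HH) (mulA HH) Ha (mulgK HH).
- by move=> g h Hh z; rewrite -(Hh g) (mulgK HH).
Qed.

Lemma prod_group n (F : 'I_n -> magma) (HF : forall i, is_group (F i)) : is_group (prodM F).
Proof.
split; [|split; [|split; [|split]]].
- by move=> a b c; apply: functional_extensionality_dep => i /=; rewrite (mulA (HF i)).
- by move=> a; apply: functional_extensionality_dep => i /=; rewrite (mul1g (HF i)).
- by move=> a; apply: functional_extensionality_dep => i /=; rewrite (mulg1 (HF i)).
- by move=> a; apply: functional_extensionality_dep => i /=; rewrite (mulVg (HF i)).
- by move=> a; apply: functional_extensionality_dep => i /=; rewrite (mulgV (HF i)).
Qed.

Definition inj n (F : 'I_n -> magma) (i : 'I_n) (a : F i) : prodM F :=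
  fun j => match i =P j with ReflectT e => eq_rect i (fun k => F k) a j e | ReflectF _ => gone end.

Lemma inj_at n (F : 'I_n -> magma) (i : 'I_n) (a : F i) : inj a i = a.
Proof.
rewrite /inj; case: (i =P i) => [e|ne]; first by rewrite (eq_axiomK e).
by exfalso; apply: ne.
Qed.

Lemma inj_off n (F : 'I_n -> magma) (i j : 'I_n) (a : F i) : j <> i -> inj a j = gone.
Proof.
move=> H; rewrite /inj; case: (i =P j) => [e|//]; by exfalso; apply: H.
Qed.

Lemma SF_normal n (F : 'I_n -> magma) (HF : forall i, is_group (F i)) (X : Type)
  (act : prodM F -> X -> X) (x : X) (Hnorm : is_normal (stab act x)) (i : 'I_n) :
  is_normal (stab_factor act x i).
Proof.
have HP := prod_group HF.
case: (Hnorm) => [[N1 [NM NV]] Nc].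
split; [split; [|split]|].
- exists (gone : prodM F); split; first by []; split; [by [] | exact: N1].
- move=> a b [g [gi [go gs]]] [h [hi [ho hs]]]; exists (g ** h); split.
    by rewrite /= gi hi.
  split; last exact: NM.
  by move=> j ji /=; rewrite go // ho // (mul1g (HF j)).
- move=> a [g [gi [go gs]]]; exists (ginv g); split.
    by rewrite /= gi.
  split; last exact: NV.
  by move=> j ji /=; rewrite go // (inv1 (HF j)).
- move=> c s [g [gi [go gs]]]; exists (inj c ** g ** ginv (inj c)); split.
    by rewrite /= inj_at gi.
  split; last exact: Nc.
  by move=> j ji /=; rewrite inj_off // go //; gnorm (HF j).
Qed.

Lemma stab_central n (F : 'I_n -> magma) (HF : forall i, is_group (F i)) (X : Type)
  (act : prodM F -> X -> X) (x : X) (Hnorm : is_normal (stab act x)) (s : prodM F)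
  (Hs : stab act x s) (i : 'I_n) :
  @center (FS act x i) (qproj (stab_factor act x i) (s i)).
Proof.
have HP := prod_group HF.
have HS := SF_normal HF Hnorm i.
case: (Hnorm) => [[N1 [NM NV]] Nc].
move=> A; case: (qproj_surj A) => c ->.
rewrite -!(qproj_mul (HF i) HS); apply/(qproj_eqP (HF i) HS).
have := Nc (ginv (inj c)) _ (NV _ Hs); rewrite (invK HP) => H1.
have Hw := NM _ _ H1 Hs.
exists (ginv (inj c) ** ginv s ** inj c ** s); split.
  by rewrite /= inj_at; gnorm (HF i).
split; last exact: Hw.
by move=> j ji /=; rewrite inj_off //; gnorm (HF j).
Qed.

Lemma natQ_const n (F : 'I_n -> magma) (HF : forall i, is_group (F i)) (X : Type)
  (act : prodM F -> X -> X) (x : X) (Hnorm : is_normal (stab act x)) (g h : prodM F) :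
  stab act x (ginv g ** h) -> natQ act x g = natQ act x h.
Proof.
move=> Hs; apply: functional_extensionality_dep => i.
have HS := SF_normal HF Hnorm i.
have HFS := quot_group (HF i) HS.
rewrite /natQ; apply/(qproj_eqP HFS (center_normal HFS)).
rewrite (qproj_inv (HF i) HS) -(qproj_mul (HF i) HS).
exact: (@stab_central _ _ HF _ _ _ Hnorm _ Hs i).
Qed.

Lemma natQ_hom n (F : 'I_n -> magma) (HF : forall i, is_group (F i)) (X : Type)
  (act : prodM F -> X -> X) (x : X) (Hnorm : is_normal (stab act x)) (g h : prodM F) :
  natQ act x (g ** h) = natQ act x g ** natQ act x h.
Proof.
transitivity (fun i => natQ act x g i ** natQ act x h i); last by [].
apply: functional_extensionality_dep => i.
have HS := SF_normal HF Hnorm i.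
have HFS := quot_group (HF i) HS.
have -> : natQ act x (g ** h) i = qproj (@center (FS act x i)) (qproj (stab_factor act x i) (g i ** h i)) by [].
by rewrite (qproj_mul (HF i) HS) (qproj_mul HFS (center_normal HFS)).
Qed.

Theorem mainTheorem18 (n : nat) (F : 'I_n -> magma)
  (HF : forall i, is_group (F i))
  (X : Type) (act : prodM F -> X -> X) (Hact : is_action act) (x : X)
  (Hnorm : is_normal (stab act x)) :
  (exists phi : quotM (stab act x) -> prodM (Qf act x),
      is_hom phi /\ surjective phi /\
      (forall g : prodM F, phi (qproj (stab act x) g) = natQ act x g)) /\
  ((forall i, ~ commutative_group (FS act x i)) ->
     (forall i, exists q : Qf act x i, q <> gone) /\
     (exists f : {y : X | orbitX act x y} -> quotM (stab act x), bijective f) /\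
     (exists f : 'I_(2 ^ n) -> {y : X | orbitX act x y}, injective f)).
Proof.
have HP := prod_group HF.
have HS i := SF_normal HF Hnorm i.
have HFS i : is_group (FS act x i) := quot_group (HF i) (HS i).
have HC i := center_normal (HFS i).
case: (Hact) => act1 actM.
pose phi := fun A : quotM (stab act x) => natQ act x (qrep A).
have phiP g : phi (qproj (stab act x) g) = natQ act x g.
  by apply: (natQ_const HF Hnorm); apply: (Nsym HP Hnorm); apply: qrep_rel.
have phiH : is_hom phi.
  move=> A B; case: (qproj_surj A) => a ->; case: (qproj_surj B) => b ->.
  by rewrite -(qproj_mul HP Hnorm) !phiP (natQ_hom HF Hnorm).
have phiS : surjective phi.
  move=> q; exists (qproj (stab act x) (fun i => qrep (qrep (q i)))); rewrite phiP.
  apply: functional_extensionality_dep => i; by rewrite /natQ /= !qrepK.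
split; first by exists phi.
move=> Hnc.
have Hq i : exists q : Qf act x i, q <> gone.
  apply: NNPP => H; apply: (Hnc i) => a b.
  have Hall (c : FS act x i) : center c.
    have E : qproj (@center (FS act x i)) c = qproj (@center _) gone.
      by apply: NNPP => ne; apply: H; exists (qproj _ c).
    move/(qproj_eqP (HFS i) (HC i)): E; rewrite (mulg1 (HFS i)) => E.
    case: (HC i) => [[_ [_ CV]] _]; have := CV _ E; by rewrite (invK (HFS i)).
  exact: Hall.
split; first exact: Hq.
pose f (y : {y : X | orbitX act x y}) : quotM (stab act x) :=
  qproj (stab act x) (proj1_sig (cid _ (proj2_sig y))).
pose g (A : quotM (stab act x)) : {y : X | orbitX act x y} :=
  exist _ (act (qrep A) x) (ex_intro _ (qrep A) erefl).
have fK : cancel f g.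
  move=> [y Hy]; apply: sig_ext; rewrite /f /g /=; case: (cid _ _) => h /= ->.
  have := qrep_rel HP Hnorm h; rewrite /stab => E.
  by rewrite -[qrep _](mulKVg HP h) actM E.
have gK : cancel g f.
  move=> A; rewrite /f /g /=; case: (cid _ _) => h /= E.
  rewrite -(qrepK A); apply/(qproj_eqP HP Hnorm).
  by rewrite /stab actM E -actM (mulVg HP) act1.
split; first by exists f; exists g.
pose q i := proj1_sig (cid _ (Hq i)).
have qP i : q i <> gone := proj2_sig (cid _ (Hq i)).
pose b2Q (b : {ffun 'I_n -> bool}) : prodM (Qf act x) := fun i => if b i then q i else gone.
have b2Q_inj : injective b2Q.
  move=> b1 b2 E; apply/ffunP => i; have := f_equal (fun t => t i) E; rewrite /b2Q /=.
  case: (b1 i); case: (b2 i) => // Ei; exfalso; apply: (qP i); first [exact: Ei | exact: (esym Ei)].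
pose s (y : prodM (Qf act x)) := proj1_sig (cid _ (phiS y)).
have sP y : phi (s y) = y := proj2_sig (cid _ (phiS y)).
have s_inj : injective s by move=> y1 y2 E; rewrite -(sP y1) -(sP y2) E.
have Hc : 2 ^ n = #|{ffun 'I_n -> bool}| by rewrite card_ffun card_bool card_ord.
exists (fun k => g (s (b2Q (enum_val (cast_ord Hc k))))).
move=> k1 k2 /(can_inj gK) /s_inj /b2Q_inj /enum_val_inj /cast_ord_inj; done.
Qed.
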